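(* Let $*$ be a rank-one preserving product on $M_{n\times m}(\mathbb{C})$, and write its identity element as $e f^*$ with $e\in\mathbb{C}^n$, $f\in\mathbb{C}^m$. Then for all $v,w\in\mathbb{C}^n$ there exists $u\in\mathbb{C}^n$ such that $v f^* * w f^* = u f^*$. Similarly, for all $v,w\in\mathbb{C}^m$ there exists $u\in\mathbb{C}^m$ such that $e v^* * e w^* = e u^*$.
   Context: A rank-one preserving product (ropp) on $M_{n\times m}(\mathbb{C})$ is an associative bilinear product $*$ on $M_{n\times m}(\mathbb{C})$ which has an identity element of rank one and such that the $*$-product of any two rank-one matrices has rank at most one. Here $u^*$ denotes the conjugate transpose of a column vector $u$. *)

(* Defs.v *)
(* The complex field C is modelled by an arbitrary
   numClosedFieldType (algebraically closed field with conjugation). *)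
From HB Require Import structures.
From mathcomp Require Import all_boot all_order all_algebra.
Set Implicit Arguments. Unset Strict Implicit. Unset Printing Implicit Defensive.
Import Order.TTheory GRing.Theory Num.Theory.
Local Open Scope ring_scope.

Definition cstar (C : numClosedFieldType) (k : nat) (u : 'cV[C]_k) : 'rV[C]_k :=
  (map_mx Num.conj u)^T.

Definition ropp (C : numClosedFieldType) (n m : nat)
    (mul : 'M[C]_(n, m) -> 'M[C]_(n, m) -> 'M[C]_(n, m)) (E : 'M[C]_(n, m)) : Prop :=
  [/\
      (forall (a : C) (A B D : 'M[C]_(n, m)), mul (a *: A + B) D = a *: mul A D + mul B D),
      (forall (a : C) (A B D : 'M[C]_(n, m)), mul A (a *: B + D) = a *: mul A B + mul A D),
      (forall A B D : 'M[C]_(n, m), mul A (mul B D) = mul (mul A B) D),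
      (\rank E = 1)%N /\ (forall A : 'M[C]_(n, m), mul E A = A /\ mul A E = A)
    &
      (forall A B : 'M[C]_(n, m), \rank A = 1%N -> \rank B = 1%N -> (\rank (mul A B) <= 1)%N)].

(* Main.v *)
Require Import Defs.
From HB Require Import structures.
From mathcomp Require Import all_boot all_order all_algebra.
Import GRing.Theory Num.Theory.
Local Open Scope ring_scope.

Lemma dep_lem (F : fieldType) (n : nat) (x y : 'cV[F]_n) :
  y != 0 -> (\rank (row_mx y x) <= 1)%N -> exists k, x = k *: y.
Proof.
move=> y0 r.
have ry : \rank y^T = 1%N.
  apply/eqP; rewrite eqn_leq rank_leq_row lt0n mxrank_eq0.
  by apply: contra y0 => /eqP H; rewrite -[y]trmxK H linear0.
have sub1 : (y^T <= col_mx y^T x^T)%MS by rewrite -addsmxE addsmxSl.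
have := mxrank_leqif_sup sub1 => /leqifP.
case: ifP => [H _|_]; last by rewrite ry -tr_row_mx mxrank_tr ltnNge r.
have : (x^T <= y^T)%MS.
  apply: submx_trans H; by rewrite -addsmxE addsmxSr.
case/submxP => D HD; exists (D 0 0).
rewrite -[x]trmxK HD trmx_mul. rewrite [D]mx11_scalar. rewrite tr_scalar_mx. rewrite mul_mx_scalar trmxK.
by rewrite mxE eqxx mulr1n.
Qed.


Lemma zfact (V: zmodType) (a v w e : V) : e = a + (v + w + e) - (a + v) - (a + w) + a.
Proof. by rewrite !opprD !addrA !(addrAC _ _ (-a)) subrr add0r !(addrAC _ _ (-v)) subrK !(addrAC _ _ (-w)) subrK addrAC addNr add0r. Qed.

Lemma main1 (C : numClosedFieldType) (n m : nat)
    (mul : 'M[C]_(n, m) -> 'M[C]_(n, m) -> 'M[C]_(n, m)) (E : 'M[C]_(n, m))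
    (e : 'cV[C]_n) (phi : 'rV[C]_m) :
  ropp mul E -> E = e *m phi ->
  forall v w : 'cV[C]_n, exists u : 'cV[C]_n,
      mul (v *m phi) (w *m phi) = u *m phi.
Proof.
case=> linl linr assoc [rE idE] r1 defE.
have mul0l D : mul 0 D = 0.
  have := linl 1 0 0 D; rewrite !scale1r addr0 => H.
  by apply: (addrI (mul 0 D)); rewrite addr0 -H.
have mul0r D : mul D 0 = 0.
  have := linr 1 D 0 0; rewrite !scale1r addr0 => H.
  by apply: (addrI (mul D 0)); rewrite addr0 -H.
have mulDl A B D : mul (A + B) D = mul A D + mul B D.
  by have := linl 1 A B D; rewrite !scale1r.
have mulDr A B D : mul D (A + B) = mul D A + mul D B.
  by have := linr 1 D A B; rewrite !scale1r.
have mulZl a A D : mul (a *: A) D = a *: mul A D.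
  by have := linl a A 0 D; rewrite !addr0 mul0l addr0.
have mulZr a A D : mul D (a *: A) = a *: mul D A.
  by have := linr a D A 0; rewrite !addr0 mul0r addr0.
have r1' A B : (\rank A <= 1)%N -> (\rank B <= 1)%N -> (\rank (mul A B) <= 1)%N.
  move=> hA hB.
  have [->|A1] := eqVneq A 0; first by rewrite mul0l mxrank0.
  have [->|B1] := eqVneq B 0; first by rewrite mul0r mxrank0.
  by apply: r1; apply/eqP; rewrite eqn_leq ?hA ?hB lt0n mxrank_eq0.
have phi0 : phi != 0.
  by apply/negP => /eqP p0; move: rE; rewrite defE p0 mulmx0 mxrank0.
have e0 : e != 0.
  by apply/negP => /eqP p0; move: rE; rewrite defE p0 mul0mx mxrank0.
have rphi : \rank phi = 1%N.
  by apply/eqP; rewrite eqn_leq rank_leq_row lt0n mxrank_eq0.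
have ruphi (u : 'cV[C]_n) : (\rank (u *m phi) <= 1)%N.
  by apply: leq_trans (mxrankM_maxr _ _) _; rewrite rphi.
move=> v w.
set P := mul (v *m phi) (w *m phi).
case sP: (P <= phi)%MS; first by case/submxP: sP => D ->; exists D.
exfalso.
set N := cokermx phi.
have PN : P *m N != 0 by rewrite -submxE sP.
have [j Pj] : exists j, P *m (N *m delta_mx j (0 : 'I_1)) != 0.
  apply/existsP; apply: contraNT PN; rewrite negb_exists => /forallP H.
  apply/eqP/matrixP => i k; have := H k; rewrite negbK mulmxA -colE.
  by move=> /eqP/matrixP/(_ i 0); rewrite !mxE.
set c := N *m delta_mx j (0 : 'I_1).
have phic : phi *m c = 0 by rewrite /c mulmxA mulmx_coker mul0mx.
have : row_full phi^T by rewrite /row_full mxrank_tr rphi.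
case/row_fullP => B HB.
have phid : phi *m B^T = 1%:M.
  by rewrite -[phi]trmxK -trmx_mul HB trmx1.
set d := B^T.
set p := P *m c.
have key s t : exists k, P *m d + (t *: v + s *: w + (s * t) *: e) = k *: p.
  set M := mul ((v + s *: e) *m phi) ((w + t *: e) *m phi).
  have defM : M = P + (t *: v + s *: w + (s * t) *: e) *m phi.
    rewrite /M !mulmxDl -!scalemxAl -defE mulDl !mulDr !mulZl !mulZr.
    have [-> _] := idE (w *m phi); have [_ ->] := idE (v *m phi).
    have [-> _] := idE E.
    by rewrite scalerA /P !addrA.
  apply: dep_lem; first by [].
  have rM : (\rank M <= 1)%N by apply: r1'.
  apply: leq_trans rM.
  have -> : row_mx p (P *m d + (t *: v + s *: w + (s * t) *: e)) = M *m row_mx c d.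
    rewrite mul_mx_row defM !mulmxDl -!mulmxA phic phid !mulmx0 !addr0.
    by rewrite !mulmx1.
  by rewrite mxrankM_maxl.
have [k0 H0] := key 0 0.
have [k1 H1] := key 0 1.
have [k2 H2] := key 1 0.
have [k3 H3] := key 1 1.
move: H0 H1 H2 H3; rewrite ?scale0r ?scale1r ?mul0r ?mulr0 ?mulr1 ?scale0r ?addr0 ?add0r ?scale1r.
move=> H0 H1 H2 H3.
have ev : v = (k1 - k0) *: p by rewrite scalerBl -H1 -H0 addrAC subrr add0r.
have ew : w = (k2 - k0) *: p by rewrite scalerBl -H2 -H0 addrAC subrr add0r.
have ee : e = (k3 - k1 - k2 + k0) *: p.
  by rewrite !scalerDl !scaleNr -H3 -H1 -H2 -H0 -zfact.
set g := k3 - k1 - k2 + k0.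
have g0 : g != 0.
  by apply: contra e0 => /eqP g0; rewrite ee -/g g0 scale0r.
have vE : v *m phi = ((k1 - k0) / g) *: E.
  by rewrite defE scalemxAl ee scalerA divfK // -ev.
have wE : w *m phi = ((k2 - k0) / g) *: E.
  by rewrite defE scalemxAl ee scalerA divfK // -ew.
move: Pj; rewrite -/c -/p /p /P vE wE mulZl mulZr.
have [-> _] := idE E.
by rewrite -!scalemxAl defE -mulmxA phic mulmx0 !scaler0 eqxx.
Qed.

Theorem mainTheorem2 (C : numClosedFieldType) (n m : nat)
    (mul : 'M[C]_(n, m) -> 'M[C]_(n, m) -> 'M[C]_(n, m)) (E : 'M[C]_(n, m))
    (e : 'cV[C]_n) (f : 'cV[C]_m) :
  ropp mul E -> E = e *m cstar f ->
  (forall v w : 'cV[C]_n, exists u : 'cV[C]_n,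
      mul (v *m cstar f) (w *m cstar f) = u *m cstar f) /\
  (forall v w : 'cV[C]_m, exists u : 'cV[C]_m,
      mul (e *m cstar v) (e *m cstar w) = e *m cstar u).
Proof.
move=> hR defE; split; first exact: main1 hR defE.
move=> v w.
pose mul' (X Y : 'M[C]_(m, n)) := (mul X^T Y^T)^T.
have hR' : ropp mul' E^T.
  case: hR => linl linr assoc [rE idE] r1; split.
  - by move=> a A B D; rewrite /mul' linearD linearZ /= linl linearD linearZ.
  - by move=> a A B D; rewrite /mul' linearD linearZ /= linr linearD linearZ.
  - by move=> A B D; rewrite /mul' !trmxK assoc.
  - split; first by rewrite mxrank_tr.
    by move=> A; rewrite /mul' trmxK; have [-> ->] := idE A^T; rewrite trmxK.
  - by move=> A B hA hB; rewrite /mul' mxrank_tr; apply: r1; rewrite mxrank_tr.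
have defE' : E^T = (cstar f)^T *m e^T by rewrite defE trmx_mul.
have [u' Hu] := @main1 _ _ _ _ _ _ _ hR' defE' (cstar v)^T (cstar w)^T.
exists (map_mx Num.conj u').
have cc : cstar (map_mx Num.conj u') = u'^T.
  by congr (_^T); apply/matrixP => i j; rewrite !mxE conjCK.
rewrite cc -[LHS]trmxK -[e *m u'^T]trmxK; congr (_^T).
by move: Hu; rewrite /mul' !trmx_mul !trmxK.
Qed.
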